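(* Let $K$ be a field and regard $K[x_1,\dots,x_n]$ as $(K[x_1])[\tilde{\bm{x}}]$ with $\tilde{\bm{x}}=(x_2,\dots,x_n)$ and a fixed monomial ordering $\succ$ on monomials in $\tilde{\bm{x}}$. Let $F=\{f_1,\dots,f_s\}\subset(K[x_1])[\tilde{\bm{x}}]\setminus K[x_1]$ with $\operatorname{lm}(f_j)=\tilde{\bm{x}}^\alpha$ for all $1\le j\le s$. If $f:=\sum_{j=1}^s f_j$ satisfies $\operatorname{lm}(f)\prec\tilde{\bm{x}}^\alpha$, then there exist $b,b_1,\dots,b_{s-1}\in K[x_1]\setminus\{0\}$ such that $$b f=\sum_{1\le j<s}b_jS(f_j,f_s).$$ Moreover, for each irreducible polynomial $p\in K[x_1]\setminus K$, the elements of $F$ can be relabeled so that the multiplier $b$ in such a representation is not divisible by $p$.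
   Context: For nonzero $f=\sum c_\alpha\tilde{\bm{x}}^\alpha$ with $c_\alpha\in K[x_1]$, $\operatorname{lm}(f)$ is the $\succ$-largest monomial with nonzero coefficient, $\operatorname{lc}(f)$ its coefficient, $\operatorname{lt}(f)=\operatorname{lc}(f)\operatorname{lm}(f)$. For $a,b\in K[x_1]\setminus\{0\}$, $\gcd$ is monic and $\operatorname{lcm}(a,b)=ab/\gcd(a,b)$. For $f,g\in(K[x_1])[\tilde{\bm{x}}]\setminus K[x_1]$, $S(f,g):=\frac{m\tilde{\bm{x}}^\gamma}{\operatorname{lt}(f)}f-\frac{m\tilde{\bm{x}}^\gamma}{\operatorname{lt}(g)}g$ with $m=\operatorname{lcm}(\operatorname{lc}f,\operatorname{lc}g)$ and $\tilde{\bm{x}}^\gamma=\operatorname{lcm}(\operatorname{lm}f,\operatorname{lm}g)$. *)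

(* Defs.v *)
From mathcomp Require Import all_boot all_order all_algebra.
From mathcomp Require Import multinomials.mpoly.
Set Implicit Arguments. Unset Strict Implicit. Unset Printing Implicit Defensive.
Import GRing.Theory.
Local Open Scope ring_scope.

(* Polynomials in K[x_1,...,x_n] viewed as (K[x_1])[x~], x~ = (x_2,...,x_n):
   the type {mpoly {poly K}[m]} with m = n - 1 variables x~. *)

Section Groebner.
Variable K : fieldType.
Variable m : nat.
Local Notation P := {mpoly {poly K}[m]}.
Local Notation M := 'X_{1..m}.

Definition monomial_order (r : rel M) : Prop :=
  [/\ reflexive r, antisymmetric r, transitive r & total r] /\
  (forall a b c : M, r a b -> r (a + c)%MM (b + c)%MM) /\
  well_founded (fun a b : M => r a b && (a != b)).

Variable r : rel M.

Definition mlt (a b : M) : bool := r a b && (a != b).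

Definition lm (f : P) : M :=
  foldl (fun a b => if r a b then b else a) 0%MM (msupp f).

Definition lc (f : P) : {poly K} := f@_(lm f).

Definition gcdm (a b : {poly K}) : {poly K} :=
  (lead_coef (gcdp a b))^-1 *: gcdp a b.
Definition lcmm (a b : {poly K}) : {poly K} := (a * b) %/ gcdm a b.

Definition spoly (f g : P) : P :=
  let mm := lcmm (lc f) (lc g) in
  let gam := mlcm (lm f) (lm g) in
  ((mm %/ lc f) *: 'X_[(gam - lm f)%MM]) * f
  - ((mm %/ lc g) *: 'X_[(gam - lm g)%MM]) * g.

Definition in_Kx1 (f : P) : bool := f == (f@_0%MM)%:MP.

End Groebner.

(* Main.v *)
Require Import Defs.
From mathcomp Require Import all_boot all_order all_algebra all_fingroup.
From mathcomp Require Import multinomials.mpoly.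
Import GRing.Theory.
Local Open Scope ring_scope.

Section Aux.
Variable K : fieldType.
Variable m : nat.
Local Notation P := {mpoly {poly K}[m]}.
Local Notation M := 'X_{1..m}.
Variable r : rel M.
Hypothesis hr : monomial_order r.

Lemma r_refl : reflexive r. Proof. by case: hr => [[]]. Qed.
Lemma r_anti : antisymmetric r. Proof. by case: hr => [[]]. Qed.
Lemma r_trans : transitive r. Proof. by case: hr => [[]]. Qed.
Lemma r_total : total r. Proof. by case: hr => [[]]. Qed.

Lemma foldl_max (l : seq M) (a0 : M) :
  let res := foldl (fun a b => if r a b then b else a) a0 l in
  [/\ res \in a0 :: l, r a0 res & forall x, x \in l -> r x res].
Proof.
elim: l a0 => [|b l IH] a0 /=.
  by split => //; [rewrite inE eqxx | apply: r_refl].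
case: (IH (if r a0 b then b else a0)) => H1 H2 H3.
have Ha : r a0 (if r a0 b then b else a0) by case: ifP => // _; apply: r_refl.
have Hb : r b (if r a0 b then b else a0).
  case: ifP => [_|]; first exact: r_refl.
  by case/orP: (r_total a0 b) => ->.
split.
- move: H1; rewrite !inE; case: ifP => _ /orP [->|->]; rewrite ?orbT //.
- exact: r_trans H2.
- move=> x; rewrite inE => /orP [/eqP ->|]; first exact: r_trans H2.
  exact: H3.
Qed.

Lemma lm_max (f : P) x : x \in msupp f -> r x (lm r f).
Proof. by case: (foldl_max (msupp f) 0%MM) => _ _; apply. Qed.

Lemma r0 (a : M) : r 0%MM a.
Proof.
case/orP: (r_total 0%MM a) => // H.
have [_ [Hc Hwf]] := hr.
case: (eqVneq a 0%MM) => [->|Ha]; first exact: r_refl.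
exfalso.
have step : forall x : M, (fun a b => r a b && (a != b)) (a + x)%MM x.
  move=> x /=; apply/andP; split.
    by have := Hc a 0%MM x H; rewrite add0m.
  apply/eqP => E. move/eqP: Ha; apply.
  by apply/eqP; rewrite -(eqm_add2r x) add0m E.
elim/(well_founded_ind Hwf): 0%MM => x IH.
exact: (IH _ (step x)).
Qed.

Lemma lm_in (f : P) : ~~ in_Kx1 f -> lm r f \in msupp f.
Proof.
move=> Hf.
case: (foldl_max (msupp f) 0%MM) => H1 _ H3.
rewrite inE in H1; case/orP: H1 => // /eqP E0.
have E : lm r f = 0%MM := E0.
case: (boolP (0%MM \in msupp f)) => [H0|H0]; first by rewrite E.
exfalso; move: Hf; rewrite /in_Kx1 => /negP; apply.
apply/eqP/mpolyP => n; rewrite mcoeffC.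
case: (eqVneq n 0%MM) => [->|Hn]; first by rewrite mulr1.
rewrite mulr0; apply/eqP; rewrite -[_ == 0]negbK -mcoeff_msupp; apply/negP => Hn'.
have := H3 _ Hn'; rewrite E0 => Hn0.
by move/eqP: Hn; apply; apply: r_anti; rewrite Hn0 r0.
Qed.

Lemma coef_lm_lt (f : P) alpha : (f == 0) || mlt r (lm r f) alpha -> f@_alpha = 0.
Proof.
case/orP => [/eqP ->|]; first by rewrite mcoeff0.
case/andP => H1 H2.
apply/eqP; rewrite -[_ == 0]negbK -mcoeff_msupp; apply/negP => Ha.
have H3 := @lm_max f alpha Ha.
by move/eqP: H2; apply; apply: r_anti; rewrite H1 H3.
Qed.

End Aux.
Lemma gcdm_facts (K : fieldType) (a b : {poly K}) : a != 0 ->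
  [/\ gcdm a b != 0, gcdm a b %| a & gcdm a b %| b].
Proof.
move=> Ha.
have Hg : gcdp a b != 0 by rewrite gcdp_eq0 negb_and Ha.
have Hc : (lead_coef (gcdp a b))^-1 != 0 by rewrite invr_eq0 lead_coef_eq0.
rewrite /gcdm !dvdpZl // dvdp_gcdl dvdp_gcdr; split => //.
by rewrite scaler_eq0 negb_or Hc Hg.
Qed.

Lemma lcmm_div (K : fieldType) (a b : {poly K}) : a != 0 -> b != 0 ->
  lcmm a b %/ a = b %/ gcdm a b /\ lcmm a b %/ b = a %/ gcdm a b.
Proof.
move=> Ha Hb; have [Hg Hga Hgb] := @gcdm_facts K a b Ha.
set g := gcdm a b in Hg Hga Hgb *.
have Ea := divpK Hga; have Eb := divpK Hgb.
have Ha' : a %/ g != 0 by apply: contraNneq Ha => E; rewrite -Ea E mul0r.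
have Hb' : b %/ g != 0 by apply: contraNneq Hb => E; rewrite -Eb E mul0r.
have EL : lcmm a b = a %/ g * (b %/ g) * g.
  rewrite /lcmm -/g -{1}Ea -{1}Eb.
  have -> : a %/ g * g * (b %/ g * g) = a %/ g * (b %/ g) * g * g.
    by rewrite -!mulrA; congr (_ * _); rewrite mulrCA.
  by rewrite mulpK.
split.
- rewrite EL -{2}Ea.
  have -> : a %/ g * (b %/ g) * g = b %/ g * (a %/ g * g) by rewrite mulrA [b %/ g * _]mulrC.
  by rewrite mulpK // mulf_neq0.
- rewrite EL -{2}Eb.
  have -> : a %/ g * (b %/ g) * g = a %/ g * (b %/ g * g) by rewrite mulrA.
  by rewrite mulpK // mulf_neq0.
Qed.

From mathcomp Require Import ring zify.
From Stdlib Require Import Lia.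

Section Main.
Variable K : fieldType.
Variable m : nat.
Local Notation P := {mpoly {poly K}[m]}.
Local Notation M := 'X_{1..m}.
Variable r : rel M.

Lemma spoly_eq (f g : P) alpha : lm r f = alpha -> lm r g = alpha ->
  f@_alpha != 0 -> g@_alpha != 0 ->
  spoly r f g = (g@_alpha %/ gcdm f@_alpha g@_alpha) *: f
              - (f@_alpha %/ gcdm f@_alpha g@_alpha) *: g.
Proof.
move=> Hf Hg Hf0 Hg0.
have E : (mlcm alpha alpha - alpha)%MM = 0%MM.
  by apply/mnmP => i; rewrite mnmBE mlcmE mnmDE mnmBE subnn addn0 subnn mnm0E.
rewrite /spoly /lc Hf Hg E mpolyX0 -!scalerAl !mul1r.
by have [-> ->] := @lcmm_div K _ _ Hf0 Hg0.
Qed.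


Lemma main_rep (s : nat) (G : 'I_s.+1 -> P) alpha (b : {poly K}) :
  (forall j, lm r (G j) = alpha) -> (forall j, (G j)@_alpha != 0) ->
  \sum_j (G j)@_alpha = 0 -> b != 0 ->
  (forall j : 'I_s, ((G ord_max)@_alpha %/ gcdm (G (widen_ord (leqnSn s) j))@_alpha (G ord_max)@_alpha) %| b) ->
  exists bs : 'I_s -> {poly K}, (forall j, bs j != 0) /\
    b *: (\sum_(j < s.+1) G j) =
    \sum_(j < s) bs j *: spoly r (G (widen_ord (leqnSn s) j)) (G ord_max).
Proof.
move=> Hlm Hc Hsum Hb Hd.
set w := widen_ord (leqnSn s) in Hd *.
set c := fun j => (G j)@_alpha.
set cs := c ord_max.
set g := fun j => gcdm (c (w j)) cs.
set d := fun j => cs %/ g j.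
set a := fun j => c (w j) %/ g j.
exists (fun j => b %/ d j).
have Ebd j : b %/ d j * d j = b := divpK (Hd j).
split.
  move=> j; apply: contraNneq Hb => E; by rewrite -(Ebd j) E mul0r.
have Hsp j : spoly r (G (w j)) (G ord_max) = d j *: G (w j) - a j *: G ord_max.
  by rewrite (spoly_eq _ _ _ (Hlm (w j)) (Hlm ord_max) (Hc _) (Hc _)).
have Hcs : cs != 0 := Hc ord_max.
have key : \sum_(j < s) b %/ d j * a j = - b.
  apply: (mulfI Hcs).
  rewrite mulr_sumr.
  have Hsum' : \sum_(j < s) c (w j) = - cs.
    move: Hsum; rewrite big_ord_recr => H; apply/eqP; rewrite -addr_eq0; apply/eqP; exact: H.
  transitivity (b * \sum_(j < s) c (w j)); last first.
    by rewrite Hsum' !mulrN mulrC.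
  rewrite mulr_sumr; apply: eq_big => // j _.
  have [Hg Hgc Hgs] := @gcdm_facts K (c (w j)) cs (Hc _).
  have Egc : a j * g j = c (w j) := divpK Hgc.
  have Egs : d j * g j = cs := divpK Hgs.
  rewrite -[in LHS]Egs -[in RHS](Ebd j) -[in RHS]Egc; ring.
rewrite (eq_bigr (fun j => b *: G (w j) - (b %/ d j * a j) *: G ord_max)); last first.
  move=> j _; rewrite Hsp scalerBr !scalerA Ebd //.
rewrite sumrB -scaler_suml key scaleNr opprK -scaler_sumr -scalerDr.
by rewrite big_ord_recr.
Qed.

End Main.


Theorem lemma4p4 (K : fieldType) (m : nat) (r : rel 'X_{1..m})
  (s : nat) (F : 'I_s.+1 -> {mpoly {poly K}[m]}) (alpha : 'X_{1..m}) :
  monomial_order r ->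
  (forall j, ~~ in_Kx1 (F j)) ->
  (forall j, lm r (F j) = alpha) ->
  (let f := \sum_(j < s.+1) F j in (f == 0) || mlt r (lm r f) alpha) ->
  (exists (b : {poly K}) (bs : 'I_s -> {poly K}),
      [/\ b != 0, (forall j, bs j != 0) &
          b *: (\sum_(j < s.+1) F j) =
          \sum_(j < s) bs j *: spoly r (F (widen_ord (leqnSn s) j)) (F ord_max)])
  /\
  (forall p : {poly K}, irreducible_poly p ->
     exists (sigma : 'S_s.+1) (b : {poly K}) (bs : 'I_s -> {poly K}),
      [/\ b != 0, (forall j, bs j != 0), ~~ (p %| b) &
          b *: (\sum_(j < s.+1) F j) =
          \sum_(j < s) bs j *: spoly r (F (sigma (widen_ord (leqnSn s) j)))
                                        (F (sigma ord_max))]).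
Proof.
move=> hr Hnk Hlm Hf.
have Hc j : (F j)@_alpha != 0.
  by rewrite -mcoeff_msupp -(Hlm j); exact: (@lm_in K m r hr).
have Hsum : \sum_j (F j)@_alpha = 0.
  by rewrite -raddf_sum; exact: (@coef_lm_lt K m r hr).
split.
  set b := (F ord_max)@_alpha.
  have Hd : forall j : 'I_s, (b %/ gcdm (F (widen_ord (leqnSn s) j))@_alpha b) %| b.
    move=> j.
    have [Hg Hgc Hgs] := @gcdm_facts K (F (widen_ord (leqnSn s) j))@_alpha b (Hc _).
    by rewrite -[X in _ %| X](divpK Hgs) dvdp_mulIl.
  have [bs [Hbs E]] := @main_rep K m r s F alpha b Hlm Hc Hsum (Hc ord_max) Hd.
  by exists b, bs; split => //; exact: Hc.
move=> p [Hp1 _].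
set c := fun j => (F j)@_alpha.
have exP : forall j, exists n, ~~ (p ^+ n.+1 %| c j).
  move=> j; exists (size (c j)); apply/negP => H.
  have := dvdp_leq (Hc j) H.
  have Hpn : p ^+ (size (c j)).+1 != 0.
    by rewrite expf_neq0 // -size_poly_gt0 (ltn_trans _ Hp1).
  rewrite -(prednK (n:=size (p ^+ _))) ?size_poly_gt0 // size_exp.
  move: Hp1; case: (size p) => [|[|k]] //= _.
  rewrite mulSn /c /= => /(leq_ltn_trans (leq_addr _ _)); by rewrite ltnNge leqnSn.
pose nv j := ex_minn (exP j).
have Hv j : p ^+ nv j %| c j /\ ~~ (p ^+ (nv j).+1 %| c j).
  rewrite /nv; case: ex_minnP => n Hn Hmin; split => //.
  case: n Hn Hmin => [|n] Hn Hmin; first by rewrite expr0 dvd1p.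
  apply/negPn/negP => H; have := Hmin _ H; by rewrite ltnn.
case: (@arg_minnP _ ord0 predT nv isT) => k _ Hk.
set sigma := perm.tperm k ord_max.
pose G := fun j => F (sigma j).
have EG : \sum_j G j = \sum_j F j.
  by rewrite [RHS](reindex_inj (@perm.perm_inj _ sigma)).
have EGc : \sum_j (G j)@_alpha = 0.
  by move: Hsum; rewrite (reindex_inj (@perm.perm_inj _ sigma)).
have HGm : G ord_max = F k by rewrite /G perm.tpermR.
set q := p ^+ nv k.
have Hqk : q %| c k by case: (Hv k).
set b := c k %/ q.
have Ebq : b * q = c k := divpK Hqk.
have Hck : c k != 0 := Hc k.
have Hb : b != 0 by apply: contraNneq Hck => E; rewrite -Ebq E mul0r.
have Hpb : ~~ (p %| b).
  apply/negP => H; case: (Hv k) => _ /negP; apply.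
  by rewrite exprS -Ebq dvdp_mul.
have Hd : forall j : 'I_s, ((G ord_max)@_alpha %/ gcdm (G (widen_ord (leqnSn s) j))@_alpha (G ord_max)@_alpha) %| b.
  move=> j; rewrite HGm -/(c k).
  set c' := (G (widen_ord (leqnSn s) j))@_alpha.
  have Hc' : c' != 0 by apply: Hc.
  have [Hg Hgc Hgs] := @gcdm_facts K c' (c k) Hc'.
  set g := gcdm c' (c k) in Hg Hgc Hgs *.
  have Hqc' : q %| c'.
    apply: dvdp_trans (dvdp_exp2l p (Hk (sigma (widen_ord (leqnSn s) j)) isT)) _; by case: (Hv (sigma (widen_ord (leqnSn s) j))).
  have Hqg : q %| g.
    rewrite /g /gcdm dvdpZr ?dvdp_gcd ?Hqc' ?Hqk //.
    by rewrite invr_eq0 lead_coef_eq0 gcdp_eq0 negb_and Hc'.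
  have Eg : g %/ q * q = g := divpK Hqg.
  have Ek : c k %/ g * g = c k := divpK Hgs.
  have Hq0 : q != 0 by apply: contraNneq Hg => E; rewrite -Eg E mulr0.
  have -> : b = c k %/ g * (g %/ q).
    have E2 : c k %/ g * (g %/ q) * q = c k by rewrite -mulrA Eg Ek.
    by rewrite /b -{1}E2 mulpK.
  exact: dvdp_mulIl.
have HGlm j : lm r (G j) = alpha by apply: Hlm.
have HGc j : (G j)@_alpha != 0 by apply: Hc.
have [bs [Hbs E]] := @main_rep K m r s G alpha b HGlm HGc EGc Hb Hd.
exists sigma, b, bs; split => //.
by rewrite -EG.
Qed.
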